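(* Let $\omega\ge 2$ and let $\Gamma$ be a connected, non-complete, $\omega$-clique regular finite simple graph. Then the largest adjacency eigenvalue $\mu_{\max}$ of the line graph $L(\Gamma)$ satisfies $2\omega-4<\mu_{\max}$.
   Context: A graph is $\omega$-clique regular if it has a nonempty edge set and every edge lies in exactly one clique of order $\omega$. $L(\Gamma)$ is the line graph of $\Gamma$ (vertices are edges of $\Gamma$, adjacent iff they share an endpoint). *)

(* Defs.v *)
From mathcomp Require Import all_boot all_order all_algebra.
Set Implicit Arguments. Unset Strict Implicit. Unset Printing Implicit Defensive.
Import Order.TTheory GRing.Theory Num.Theory.

Definition simple_graph (T : finType) (G : rel T) : Prop :=
  symmetric G /\ irreflexive G.

Definition connected_graph (T : finType) (G : rel T) : Prop :=
  forall x y : T, connect G x y.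

Definition complete_graph (T : finType) (G : rel T) : Prop :=
  forall x y : T, x != y -> G x y.

Definition is_clique (T : finType) (G : rel T) (K : {set T}) : bool :=
  [forall x in K, forall y in K, (x != y) ==> G x y].

Definition clique_regular (T : finType) (G : rel T) (w : nat) : Prop :=
  (exists x y, G x y) /\
  forall x y, G x y ->
    #|[set K : {set T} | [&& is_clique G K, #|K| == w, x \in K & y \in K]]| = 1.

Definition edges (T : finType) (G : rel T) : {set {set T}} :=
  [set e : {set T} | [exists x, exists y, G x y && (e == [set x; y])]].

Definition line_adj (R : nzRingType) (T : finType) (G : rel T)
  : 'M[R]_#|edges G| :=
  \matrix_(i, j) ((enum_val i != enum_val j) &&
                  (enum_val i :&: enum_val j != set0))%:R%R.

Definition largest_eigenvalue (R : numFieldType) (n : nat) (A : 'M[R]_n) (mu : R)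
  : Prop :=
  eigenvalue A mu /\ forall nu, eigenvalue A nu -> (nu <= mu)%R.

(* Main.v *)
Require Import Defs.
From mathcomp Require Import all_boot all_order all_algebra.
Import Order.TTheory GRing.Theory Num.Theory.
From mathcomp Require Import ring lra zify.
From mathcomp Require Import sesquilinear spectral.
From mathcomp Require Import polyrcf complex.
Local Open Scope ring_scope.

Section Sp.
Local Open Scope sesquilinear_scope.
Lemma spectral_eig (C : numClosedFieldType) n (A : 'M[C]_n) i :
  A \is normalmx -> eigenvalue A (spectral_diag A 0 i).
Proof.
move=> /orthomx_spectralP HA.
have Pu := spectral_unit A.
move: HA Pu; set P := spectralmx A; set d := spectral_diag A => HA Pu.
apply/eigenvalueP; exists (delta_mx 0 i *m P).
  rewrite [X in _ *m X]HA !mulmxA mulmxK // scalemxAl; congr (_ *m _).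
  apply/matrixP => a b; rewrite mul_mx_diag !mxE (ord1 a) eqxx /=.
  by case: eqP => [->|]; rewrite ?mulr1 ?mul1r ?mulr0 ?mul0r.
apply/negP => /eqP H.
have : (delta_mx 0 i : 'rV[C]_n) *m P *m invmx P = 0 by rewrite H mul0mx.
rewrite mulmxK // => /matrixP /(_ 0 i); rewrite !mxE !eqxx /= => /eqP.
by rewrite oner_eq0.
Qed.

Lemma rayleigh (C : numClosedFieldType) n (A : 'M[C]_n) (x : 'rV[C]_n) (q : C) :
  A \is hermsymmx -> x != 0 -> q \is Num.real ->
  q * (x *m x^t*) 0 0 <= (x *m A *m x^t*) 0 0 ->
  exists i, q <= spectral_diag A 0 i.
Proof.
move=> Aher xn0 qr Hle.
have /orthomx_spectralP HA := hermitian_normalmx Aher.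
have dreal := hermitian_spectral_diag_real Aher.
have Pu := spectral_unitarymx A.
move: HA Pu dreal; set P := spectralmx A; set d := spectral_diag A => HA Pu dreal.
have iP : invmx P = P^t* by rewrite invmx_unitary.
have Punit : P \in unitmx by rewrite unitarymx_unit.
set y := x *m P^t*.
have ey : x = y *m P by rewrite /y -iP mulmxKV.
have yt : y^t* = P *m x^t* by rewrite /y trmx_mul map_mxM trmxCK.
have e1 : x *m A *m x^t* = y *m diag_mx d *m y^t*.
  by rewrite yt HA iP /y !mulmxA.
have e2 : x *m x^t* = y *m y^t*.
  by rewrite yt /y -mulmxA (mulmxA _ P) -iP mulVmx // mul1mx.
have yn0 : y != 0 by apply: contraNneq xn0 => y0; rewrite ey y0 mul0mx.
have [j0 yj0] : exists j, y 0 j != 0.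
  apply/existsP; apply: contraNT yn0 => /existsPn H; apply/eqP/matrixP => a b.
  by rewrite (ord1 a) [RHS]mxE; have := H b; rewrite negbK => /eqP.
have [/existsP //|/existsPn Hn] := boolP [exists i, q <= d 0 i].
have lt : forall j, d 0 j - q < 0.
  move=> j; rewrite subr_lt0; have := Hn j; rewrite real_leNgt //; first by move/negPn.
  exact: (mxOverP dreal 0 j).
clearbody y.
move: Hle; rewrite e1 e2 !mxE mul_mx_diag.
rewrite big_distrr /= -subr_ge0 -sumrB.
have key : forall j, y 0 j * d 0 j * (y 0 j)^* - q * (y 0 j * (y 0 j)^*)
   = (d 0 j - q) * `|y 0 j| ^+ 2.
  by move=> j; rewrite normCK; ring.
under eq_bigr do rewrite !mxE key.
rewrite (bigD1 j0) //=.
move=> H; exfalso; move: H; apply/negP/negbT/lt_geF; rewrite -[X in _ < X](addr0 0).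
apply: ltr_leD; first by rewrite nmulr_rlt0 // exprn_gt0 // normr_gt0.
apply: sumr_le0 => i _; rewrite nmulr_rle0 // exprn_ge0 // normr_ge0.
Qed.


Lemma rayleigh_real (R : rcfType) n (A : 'M[R]_n) (x : 'rV[R]_n) (q : R) :
  A^T = A -> x != 0 -> q * (x *m x^T) 0 0 <= (x *m A *m x^T) 0 0 ->
  exists mu, eigenvalue A mu /\ q <= mu.
Proof.
move=> As xn0 Hle.
pose f := real_complex R.
have fr : forall r : R, f r \is Num.real by move=> r; apply/complex_realP; exists r.
have fc : forall r : R, (f r)^* = f r by move=> r; apply/CrealP.
have Aher : map_mx f A \is hermsymmx.
  apply/is_hermitianmxP; rewrite expr0 scale1r; apply/matrixP => i j.
  by rewrite !mxE fc -[in RHS]As mxE.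
have xt : (map_mx f x) ^t* = map_mx f (trmx x) by apply/matrixP => i j; rewrite !mxE fc.
have xn0' : map_mx f x != 0 by rewrite map_mx_eq0.
have [i Hi] : exists i, f q <= spectral_diag (map_mx f A) 0 i.
  apply: (@rayleigh _ _ _ _ _ Aher xn0' (fr q)).
  have m00 : forall M : 'M[R]_1, (map_mx f M) 0 0 = f (M 0 0) by move=> M; rewrite mxE.
  by rewrite xt -!map_mxM !m00 -rmorphM lecR.
  have dreal := hermitian_spectral_diag_real Aher.
  have di : f (Re (spectral_diag (map_mx f A) 0 i)) = spectral_diag (map_mx f A) 0 i.
    by apply: RRe_real; exact: (mxOverP dreal 0 i).
  exists (Re (spectral_diag (map_mx f A) 0 i)); split.
    have E := @spectral_eig _ _ _ i (hermitian_normalmx Aher); rewrite -di in E.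
    by rewrite -(eigenvalue_map f); exact: E.
  by move: Hi; rewrite -[X in _ <= X]di lecR.
Qed.

End Sp.

Lemma seq_max (R : realDomainType) (s : seq R) (a : R) :
  exists2 m, m \in a :: s & forall y, y \in a :: s -> y <= m.
Proof.
elim: s a => [|b s IH] a.
  by exists a => [|y]; rewrite ?mem_head // inE => /eqP ->.
have [m ms mge] := IH b.
have [am|ma] := leP a m.
  exists m; first by rewrite inE ms orbT.
  by move=> y; rewrite inE => /orP [/eqP ->|/mge].
exists a; first by rewrite mem_head.
move=> y; rewrite inE => /orP [/eqP ->//|/mge ym].
exact: le_trans ym (ltW ma).
Qed.

Lemma max_eig (R : rcfType) n (A : 'M[R]_n) (c : R) :
  (exists mu, eigenvalue A mu /\ c < mu) ->
  exists mu, (eigenvalue A mu /\ forall nu, eigenvalue A nu -> nu <= mu) /\ c < mu.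
Proof.
move=> [mu0 [e0 c0]].
have pn0 : char_poly A != 0 by rewrite monic_neq0 // char_poly_monic.
have Hr := roots_on_rootsR pn0.
have [m ms mge] := @seq_max _ (rootsR (char_poly A)) mu0.
exists m; split; last by apply: lt_le_trans c0 (mge _ (mem_head _ _)).
split.
  move: ms; rewrite inE => /orP [/eqP -> //|].
  by rewrite -Hr eigenvalue_root_char => /andP [].
move=> nu; rewrite eigenvalue_root_char => rnu; apply: mge.
by rewrite inE -Hr rnu andbT orbC /=. 
Qed.

Lemma cliqueP (T : finType) (G : rel T) K x y :
  is_clique G K -> x \in K -> y \in K -> x != y -> G x y.
Proof.
move=> /forallP /(_ x) /implyP Hx xK yK; move: (Hx xK) => /forallP /(_ y) /implyP Hy.
by move: (Hy yK) => /implyP.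
Qed.

Arguments cliqueP {T G K x y}.

Lemma deg_big (T : finType) (G : rel T) w : (2 <= w)%N -> simple_graph G ->
  connected_graph G -> ~ complete_graph G -> clique_regular G w ->
  exists v, (2 * w - 2 <= #|[set u | G v u]|)%N.
Proof.
move=> w2 [Gs Gi] Gc Gnc [[x0 [y0 Gxy]] Hcr].
have getK : forall a b, G a b -> exists K, [/\ is_clique G K, #|K| = w, a \in K & b \in K].
  move=> a b Gab; have /eqP /cards1P [K HK] := Hcr a b Gab.
  have : K \in [set K : {set T} | [&& is_clique G K, #|K| == w, a \in K & b \in K]].
    by rewrite HK set11.
  by rewrite inE => /and4P [? /eqP ? ? ?]; exists K.
have uniqK : forall a b K K', G a b ->
    [/\ is_clique G K, #|K| = w, a \in K & b \in K] ->
    [/\ is_clique G K', #|K'| = w, a \in K' & b \in K'] -> K = K'.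
  move=> a b K K' Gab [? ? ? ?] [? ? ? ?]; have := Hcr a b Gab.
  set S := [set _ | _] => HS.
  have KS : K \in S by rewrite inE; apply/and4P; split=> //; apply/eqP.
  have K'S : K' \in S by rewrite inE; apply/and4P; split=> //; apply/eqP.
  apply/eqP; apply: contraT => neq.
  have : (#|[set K; K']| <= #|S|)%N.
    by apply: subset_leq_card; apply/subsetP => z /set2P [] ->.
  by rewrite cards2 neq HS.
have [/existsP [v hv]|/existsPn Hs] := boolP [exists v, (2 * w - 2 <= #|[set u | G v u]|)%N].
  by exists v.
exfalso; apply: Gnc.
have [K0 [K0c K0w x0K y0K]] := getK x0 y0 Gxy.
have closed : forall a b, a \in K0 -> G a b -> b \in K0.
  move=> a b aK Gab; apply: contraT => bK.
  have [K' [K'c K'w aK' bK']] := getK a b Gab.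
  have disj : forall c, c \in K0 -> c \in K' -> c = a.
    move=> c cK cK'; apply/eqP; apply: contraT => ca.
    have Gac : G a c by apply: (cliqueP K0c) => //; rewrite eq_sym.
    have E := uniqK a c K0 K' Gac (And4 K0c K0w aK cK) (And4 K'c K'w aK' cK').
    by move: bK; rewrite E bK'.
  have sub : (K0 :\ a) :|: (K' :\ a) \subset [set u | G a u].
    apply/subsetP => z; rewrite !inE => /orP [] /andP [za zK].
      by apply: (cliqueP K0c) => //; rewrite eq_sym.
    by apply: (cliqueP K'c) => //; rewrite eq_sym.
  have I0 : (K0 :\ a) :&: (K' :\ a) = set0.
    apply/setP => z; rewrite !inE; apply/negP => /andP [/andP [za zK] /andP [_ zK']].
    by move: za; rewrite (disj z zK zK') eqxx.
  have c1 := cardsD1 a K0; have c2 := cardsD1 a K'.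
  rewrite aK K0w in c1; rewrite aK' K'w in c2.
  have := subset_leq_card sub; rewrite cardsU I0 cards0.
  have := Hs a; rewrite -ltnNge. lia.
have allK : forall z, z \in K0.
  move=> z; have /connectP [p pth ->] := Gc x0 z.
  elim: p (x0) x0K pth => [|b p IH] a aK //=.
  by case/andP => Gab pth; apply: IH (closed a b aK Gab) pth.
by move=> a b ab; apply: (cliqueP K0c).
Qed.

Lemma sum_ind (R : nzRingType) (I : finType) (B : {set I}) :
  \sum_i ((i \in B)%:R : R) = #|B|%:R.
Proof.
rewrite -sumr_const [RHS]big_mkcond /=; apply: eq_bigr => i _.
by case: (i \in B).
Qed.

Theorem corollary1 (R : rcfType) (T : finType) (G : rel T) (w : nat) :
  (2 <= w)%N ->
  simple_graph G ->
  connected_graph G ->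
  ~ complete_graph G ->
  clique_regular G w ->
  exists mu : R,
    largest_eigenvalue (line_adj R G) mu /\
    2 * w%:R - 4 < mu.
Proof.
move=> w2 Gsg Gc Gnc Hcr.
have [v dv] := @deg_big _ _ _ w2 Gsg Gc Gnc Hcr.
case: Gsg => Gs Gi.
set S := [set i : 'I_#|edges G| | v \in enum_val i].
have dS : (#|[set u | G v u]| <= #|S|)%N.
  have inj : {in [set u | G v u] &, injective (fun u => [set v; u])}.
    move=> u1 u2; rewrite !inE => G1 G2 E.
    have : u1 \in [set v; u2] by rewrite -E set22.
    case/set2P => // u1v; by move: G1; rewrite u1v Gi.
  rewrite -(card_in_imset inj) -(card_imset _ (@enum_val_inj _ (mem (edges G)))).
  apply: subset_leq_card; apply/subsetP => e /imsetP [u Gvu ->]; rewrite inE in Gvu.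
  have Ee : [set v; u] \in edges G.
    by rewrite inE; apply/existsP; exists v; apply/existsP; exists u; rewrite Gvu eqxx.
  apply/imsetP; exists (enum_rank_in Ee [set v; u]); last by rewrite enum_rankK_in.
  by rewrite inE enum_rankK_in // set21.
set A := line_adj R G.
have As : A^T = A.
  by apply/matrixP => i j; rewrite !mxE eq_sym setIC.
set x := \row_i ((i \in S)%:R : R).
have e1 : (x *m x^T) 0 0 = #|S|%:R.
  rewrite mxE -sum_ind; apply: eq_bigr => i _; rewrite !mxE.
  by case: (i \in S); rewrite ?mulr1 ?mulr0.
have key : forall j, j \in S -> (x *m A) 0 j = #|S|%:R - 1.
  move=> j jS; rewrite mxE (cardsD1 j S) jS natrD [true%:R + _]addrC addrK -sum_ind.
  apply: eq_bigr => i _; rewrite !mxE !inE.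
  case iS: (v \in enum_val i); last by rewrite mul0r andbF.
  rewrite mul1r andbT.
  have -> : enum_val i :&: enum_val j != set0.
    by apply/set0Pn; exists v; rewrite inE iS; move: jS; rewrite inE.
  by rewrite andbT (inj_eq enum_val_inj).
have e2 : (x *m A *m x^T) 0 0 = #|S|%:R * (#|S|%:R - 1).
  rewrite mxE.
  transitivity (\sum_j ((j \in S)%:R * (#|S|%:R - 1) : R)); last by rewrite -mulr_suml sum_ind.
  apply: eq_bigr => j _.
  have xj : x^T j 0 = (j \in S)%:R by rewrite !mxE.
  rewrite xj; case jS: (j \in S); first by rewrite key // mulr1 mul1r.
  by rewrite mulr0 mul0r.
have Spos : (0 < #|S|)%N by lia.
have xn0 : x != 0.
  have [j jS] : exists j, j \in S by apply/set0Pn; rewrite -card_gt0.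
  apply/eqP => /matrixP /(_ 0 j); rewrite !mxE jS => /eqP; rewrite oner_eq0.
  by [].
have [mu [emu qmu]] : exists mu, eigenvalue A mu /\ #|S|%:R - 1 <= mu.
  by apply: (@rayleigh_real R _ A x (#|S|%:R - 1) As xn0); rewrite e1 e2 mulrC.
apply: max_eig; exists mu; split => //.
have H : (2 * w <= #|S| + 2)%N by lia.
have : ((2 * w)%:R <= (#|S| + 2)%:R :> R) by rewrite ler_nat.
rewrite natrM natrD => H2.
lra.
Qed.
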